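(* Let $n,r\ge1$, let $M\in\mathbb{F}[x]^{r\times r}$ and $N\in\mathbb{F}[y]^{r\times r}$ have all entries of degree $<n$, and let $\omega\in\mathbb{F}$ have multiplicative order $\ge n^2$. Then for every $\alpha\in\mathbb{F}$, $$\mathrm{span}\{\mathrm{coeff}_{x^iy^j}(M(x)N(y))\}_{0\le i,j<n}\supseteq\mathrm{span}\{M(\omega^\ell\alpha)N((\omega^\ell\alpha)^n)\}_{0\le\ell<r^2},$$ and for all but fewer than $n^2r^2$ values of $\alpha\in\mathbb{F}$ these two spans are equal.
   Context: For a matrix $P$ with polynomial entries, $\mathrm{coeff}_{x^iy^j}(P)$ is the scalar matrix obtained by taking the coefficient of the monomial $x^iy^j$ in each entry. Spans are $\mathbb{F}$-linear spans in $\mathbb{F}^{r\times r}$. *)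

(* Defs.v *)
From HB Require Import structures.
From mathcomp Require Import all_boot all_order all_algebra.
Set Implicit Arguments. Unset Strict Implicit. Unset Printing Implicit Defensive.
Import GRing.Theory.
Local Open Scope ring_scope.

(* Bivariate polynomials in x (inner variable) and y (outer variable):
   an element P : {poly {poly F}} has coefficient of x^i y^j equal to (P`_j)`_i. *)

Definition liftX (F : fieldType) (r : nat) (M : 'M[{poly F}]_r) : 'M[{poly {poly F}}]_r :=
  map_mx (fun p : {poly F} => p%:P) M.

Definition liftY (F : fieldType) (r : nat) (N : 'M[{poly F}]_r) : 'M[{poly {poly F}}]_r :=
  map_mx (fun q : {poly F} => map_poly polyC q) N.

Definition coeffXY (F : fieldType) (r : nat) (P : 'M[{poly {poly F}}]_r) (i j : nat)
  : 'M[F]_r :=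
  \matrix_(a, b) ((P a b)`_j)`_i.

Definition evalmx (F : fieldType) (r : nat) (M : 'M[{poly F}]_r) (a : F) : 'M[F]_r :=
  map_mx (fun p => p.[a]) M.

Definition coeff_family (F : fieldType) (r n : nat) (M N : 'M[{poly F}]_r) : seq 'M[F]_r :=
  [seq coeffXY (liftX M *m liftY N) i j | i <- iota 0 n, j <- iota 0 n].

Definition eval_family (F : fieldType) (r n : nat) (M N : 'M[{poly F}]_r) (w a : F)
  : seq 'M[F]_r :=
  [seq evalmx M (w ^+ l * a) *m evalmx N ((w ^+ l * a) ^+ n) | l <- iota 0 (r ^ 2)].

Definition order_ge (F : fieldType) (w : F) (k : nat) : Prop :=
  w != 0 /\ forall m : nat, (0 < m)%N -> (m < k)%N -> w ^+ m != 1.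

(* Main.v *)
Require Import Defs.
From HB Require Import structures.
From mathcomp Require Import all_boot all_order all_algebra.
From mathcomp Require Import zify ring perm.
From Stdlib Require Import Classical IndefiniteDescription.
Import GRing.Theory.
Local Open Scope ring_scope.

Set Implicit Arguments. Unset Strict Implicit. Unset Printing Implicit Defensive.

Section PolyFacts.
Variable F : fieldType.

Lemma size_prod_bound (I : Type) (s : seq I) (f : I -> {poly F}) N :
  (0 < N)%N -> (forall i, (size (f i) <= N)%N) ->
  (size (\prod_(i <- s) f i)%R <= size s * (N - 1) + 1)%N.
Proof.
move=> N0 hf; elim: s => [|x s IH]; first by rewrite big_nil size_poly1.
rewrite big_cons; apply: leq_trans (size_polyMleq _ _) _.
have := hf x; move: IH => /=; lia.
Qed.

Lemma size_det_bound d (A : 'M[{poly F}]_d) N :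
  (0 < N)%N -> (forall i j, (size (A i j) <= N)%N) ->
  (size (\det A) <= d * (N - 1) + 1)%N.
Proof.
move=> N0 hA; rewrite /determinant; apply: leq_trans (size_sum _ _ _) _.
apply/bigmax_leqP => s _; rewrite size_Msign.
have := @size_prod_bound _ (index_enum 'I_d) (fun i => A i (s i)) N N0 (fun i => hA _ _).
by rewrite /index_enum -enumT size_enum_ord.
Qed.

Lemma roots_list (p : {poly F}) : p != 0 ->
  exists s : seq F, (size s < size p)%N /\ forall a, root p a -> a \in s.
Proof.
move: {2}(size p) (leqnn (size p)) => n; elim: n p => [|n IH] p sp p0.
  by move: p0; rewrite -size_poly_eq0; move: sp; rewrite leqn0 => ->.
case: (classic (exists a, root p a)) => [[a /factor_theorem [q pq]]|nr]; last first.
  exists [::]; split; first by rewrite lt0n size_poly_eq0.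
  by move=> a ra; case: nr; exists a.
have q0 : q != 0 by apply: contraNneq p0; rewrite pq => ->; rewrite mul0r.
have sq : size p = (size q).+1 by rewrite pq size_mul ?polyXsubC_eq0 // size_XsubC addn2.
have [s [ss hs]] := IH q ltac:(by rewrite -ltnS -sq) q0.
exists (a :: s); split; first by rewrite /= sq.
move=> b; rewrite pq rootM root_XsubC inE => /orP [/hs ->|->]; by rewrite ?orbT ?eqxx.
Qed.

End PolyFacts.

Section Core.
Variables (F : fieldType) (vT : vectType F).

Lemma span_coefs (s : seq nat) (f : nat -> vT) v :
  uniq s -> v \in <<map f s>>%VS ->
  exists lam : nat -> F, v = \sum_(k <- s) lam k *: f k.
Proof.
elim: s v => [|k s IH] v /=.
  by rewrite span_nil memv0 => _ /eqP ->; exists (fun _ => 0); rewrite big_nil.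
case/andP=> ks us; rewrite span_cons => /memv_addP [u /vlineP [a ->] [z zs ->]].
have [lam ->] := IH z us zs.
exists (fun i => if i == k then a else lam i).
rewrite big_cons eqxx; congr (_ + _).
apply: eq_big_seq => i iS; case: eqP => // eik.
by move: ks; rewrite -eik iS.
Qed.

Variables (C : nat -> vT).
Definition Qk k := C k \notin <<map C (iota 0 k)>>%VS.
Definition Km m := [seq k <- iota 0 m | Qk k].

Lemma KmS m : Km m.+1 = Km m ++ (if Qk m then [:: m] else [::]).
Proof. by rewrite /Km -addn1 iotaD filter_cat /= add0n; case: (Qk m). Qed.

Lemma span_Km m : <<map C (iota 0 m)>>%VS = <<map C (Km m)>>%VS.
Proof.
elim: m => [|m IH] //.
rewrite KmS -addn1 iotaD !map_cat !span_cat add0n -IH /=.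
case Q: (Qk m) => //=.
rewrite span_nil addv0; apply/addv_idPl.
move/negbFE: Q => Q; apply/span_subvP => x; rewrite inE => /eqP -> //.
Qed.

Lemma free_Km m : free (map C (Km m)).
Proof.
elim: m => [|m IH]; first by rewrite /free span_nil dimv0.
rewrite KmS map_cat; case Q: (Qk m); last by rewrite cats0.
rewrite (perm_free (X:= _ ++ _) (Y := C m :: map C (Km m))); last first.
  by rewrite /= cats1 perm_rcons.
by rewrite free_cons IH -span_Km andbT; exact: Q.
Qed.

Lemma Km_uniq m : uniq (Km m).
Proof. exact/filter_uniq/iota_uniq. Qed.

Lemma mem_Km m k : (k \in Km m) = (k < m)%N && Qk k.
Proof. by rewrite mem_filter mem_iota add0n andbC. Qed.

Lemma Km_ext N m (lam : nat -> F) : (m <= N)%N ->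
  \sum_(k <- Km m) lam k *: C k =
  \sum_(k <- Km N) (if (k < m)%N then lam k else 0) *: C k.
Proof.
move=> mN; rewrite /Km -(subnKC mN) iotaD filter_cat big_cat /=.
rewrite [X in _ + X]big1_seq ?addr0; last first.
  move=> k; rewrite mem_filter mem_iota add0n => /and4P [_ _ mk _].
  by rewrite ltnNge mk scale0r.
apply: eq_big_seq => k; rewrite mem_filter mem_iota => /and3P [_ _].
by rewrite add0n => ->.
Qed.

Lemma coef_exists N j : (j < N)%N ->
  exists lam : nat -> F, C j = \sum_(k <- Km N) lam k *: C k /\
    (forall k, (j < k)%N -> lam k = 0) /\ (Qk j -> lam j = 1).
Proof.
move=> jN; case Q: (Qk j).
  exists (fun k => (k == j)%:R); split; last first.
    by split=> [k jk|_]; [rewrite gtn_eqF | rewrite eqxx].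
  rewrite (eq_bigr (fun k => (if (k < j.+1)%N then (k == j)%:R else 0) *: C k)); last first.
    by move=> k _; case: eqP => [->|]; rewrite ?ltnSn // if_same.
  rewrite -Km_ext // KmS Q big_cat big_seq1 eqxx scale1r big1_seq; first by rewrite Monoid.simpm.
  by move=> k /andP [_]; rewrite mem_Km => /andP [kj _]; rewrite ltn_eqF // scale0r.
have : C j \in <<map C (Km j)>>%VS by rewrite -span_Km; move/negbFE: Q.
case/span_coefs => [|mu ->]; first exact: Km_uniq.
exists (fun k => if (k < j)%N then mu k else 0); split.
  by apply: Km_ext; exact: ltnW.
split=> [k jk|]; first by rewrite ltnNge ltnW.
by rewrite /Qk => /negP; move/negbFE: Q.
Qed.


Definition Ev N (b : F) : vT := \sum_(j < N) b ^+ j *: C j.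

Theorem core N R (w : F) : (0 < N)%N -> (0 < R)%N -> w != 0 ->
  (forall m, (0 < m)%N -> (m < N)%N -> w ^+ m != 1) ->
  (\dim (fullv : {vspace vT}) <= R)%N ->
  exists bad : seq F, (size bad < N * R)%N /\ forall a, a \notin bad ->
   (<<map C (iota 0 N)>> <= <<[seq Ev N (w ^+ l * a) | l <- iota 0 R]>>)%VS.
Proof.
move=> N0 R0 w0 hw hR.
set K := Km N; set d := size K.
have dR : (d <= R)%N.
  rewrite /d /K; have := free_Km N; rewrite /free size_map => /eqP <-.
  by apply: leq_trans hR; apply: dimvS; apply: subvf.
have [c hc] : exists c : nat -> nat -> F, forall j, (j < N)%N ->
  C j = \sum_(k <- K) c j k *: C k /\
    (forall k, (j < k)%N -> c j k = 0) /\ (Qk j -> c j j = 1).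
  have H : forall j, exists lam : nat -> F, (j < N)%N ->
     C j = \sum_(k <- K) lam k *: C k /\
    (forall k, (j < k)%N -> lam k = 0) /\ (Qk j -> lam j = 1).
    move=> j; case: (ltnP j N) => jN; last by exists (fun _ => 0).
    by have [lam H] := coef_exists jN; exists lam.
  exists (fun j => proj1_sig (constructive_indefinite_description _ (H j))).
  by move=> j; exact: (proj2_sig (constructive_indefinite_description _ (H j))).
pose kt (t : 'I_d) := nth 0%N K t.
have ktK t : kt t \in K by apply: mem_nth.
have ktN t : (kt t < N)%N by move: (ktK t); rewrite mem_Km => /andP [].
have ktQ t : Qk (kt t) by move: (ktK t); rewrite mem_Km => /andP [].
have ktlt (t s : 'I_d) : (t < s)%N -> (kt t < kt s)%N.
  have sK : sorted ltn K by apply: sorted_filter; [exact: ltn_trans | exact: iota_ltn_sorted].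
  by move=> ts; apply: (sorted_ltn_nth ltn_trans 0 sK) => //; rewrite inE ltn_ord.
pose Gp : 'M[{poly F}]_d := \matrix_(l, t) \poly_(j < N) (c j (kt t) * w ^+ (l * j)).
pose Qm : 'M[{poly F}]_d := \matrix_(l, t)
   \poly_(i < N - kt t) (c (kt t + i)%N (kt t) * w ^+ (l * (kt t + i))).
pose Dg : 'rV[{poly F}]_d := \row_t 'X^(kt t).
have GQ : Gp = Qm *m diag_mx Dg.
  apply/matrixP => l t; rewrite mul_mx_diag !mxE; apply/polyP => i.
  rewrite coefMXn !coef_poly.
  have kN := ktN t.
  case: (ltnP i (kt t)) => h.
    by rewrite (ltn_trans h kN) (proj1 (proj2 (hc i (ltn_trans h kN))) (kt t) h) mul0r.
  rewrite subnKC //.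
  by have -> : (i - kt t < N - kt t)%N = (i < N)%N by apply/idP/idP; lia.
have detQ0 : \det Qm != 0.
  have e : map_mx (horner_eval 0) Qm = Vandermonde d (\row_t w ^+ kt t).
    apply/matrixP => l t; rewrite !mxE /horner_eval horner_coef0 coef_poly subn_gt0 ktN.
    by rewrite addn0 (proj2 (proj2 (hc _ (ktN t))) (ktQ t)) mul1r mulnC exprM.
  have : \det (map_mx (horner_eval 0) Qm) != 0.
    rewrite e det_Vandermonde; apply/prodf_neq0 => i _; apply/prodf_neq0 => j ij.
    rewrite !mxE subr_eq0; apply/eqP => h.
    have kij := ktlt _ _ ij.
    have := hw (kt j - kt i)%N; rewrite subn_gt0 kij => /(_ isT).
    have -> : (kt j - kt i < N)%N by have := ktN j; lia.
    move=> /(_ isT); apply/negP; rewrite negbK.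
    have wi : w ^+ kt i != 0 by rewrite expf_neq0.
    apply/eqP/(mulfI wi); rewrite -exprD subnKC ?mulr1 //; exact: ltnW.
  by rewrite det_map_mx; apply: contraNneq => ->; rewrite rmorph0.
have detG0 : \det Gp != 0.
  rewrite GQ det_mulmx det_diag mulf_neq0 //.
  by apply/prodf_neq0 => t0 _; rewrite mxE expf_neq0 // polyX_eq0.
have sG : (size (\det Gp) <= d * (N - 1) + 1)%N.
  by apply: size_det_bound => // i j; rewrite mxE; apply: size_poly.
have [bad [sb hb]] := roots_list detG0.
exists bad; split.
  have : (d * (N - 1) <= R * (N - 1))%N by rewrite leq_mul2r dR orbT.
  have e : (R * (N - 1) + R = N * R)%N by rewrite -mulnSr subn1 prednK // mulnC.
  move: sb sG e; move: (d * (N - 1))%N (R * (N - 1))%N (N * R)%N => x y z s1 s2 s3 s4; have := R0; move: (size bad) (size (\det Gp)) s1 s2 s3 s4 => u v; lia.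
move=> a abad.
pose Ga := map_mx (horner_eval a) Gp.
have GaU : Ga \in unitmx.
  rewrite unitmxE unitfE det_map_mx /horner_eval.
  by apply: contra abad => /eqP h; apply: hb; apply/eqP.
have Eexp (l : 'I_d) : Ev N (w ^+ l * a) = \sum_(t < d) Ga l t *: C (kt t).
  rewrite /Ev.
  transitivity (\sum_(j < N) \sum_(k <- K) ((w ^+ l * a) ^+ j * c j k) *: C k).
    apply: eq_bigr => j _; rewrite {1}(proj1 (hc j (ltn_ord j))) scaler_sumr.
    by apply: eq_bigr => k _; rewrite scalerA.
  rewrite exchange_big /= (big_nth 0%N) big_mkord.
  apply: eq_bigr => t _; rewrite -scaler_suml; congr (_ *: _).
  rewrite /Ga mxE /horner_eval mxE horner_poly; apply: eq_bigr => j _.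
  by rewrite exprMn -exprM mulrC mulrA.
have Bin (s : 'I_d) : C (kt s) \in <<[seq Ev N (w ^+ l * a) | l <- iota 0 R]>>%VS.
  pose H := invmx Ga.
  have -> : C (kt s) = \sum_(l < d) H s l *: Ev N (w ^+ l * a).
    under eq_bigr do rewrite Eexp scaler_sumr.
    rewrite exchange_big /=.
    under eq_bigr do under eq_bigr do rewrite scalerA.
    under eq_bigr do rewrite -scaler_suml.
    have hm t : \sum_(l < d) H s l * Ga l t = (s == t)%:R.
      by have := mulVmx GaU; rewrite -/H => /matrixP /(_ s t); rewrite !mxE.
    under eq_bigr do rewrite hm.
    rewrite (bigD1 s) //= eqxx scale1r big1 ?addr0 //.
    by move=> t ts; rewrite eq_sym (negbTE ts) scale0r.
  apply: memv_suml => l _; apply: memvZ; apply: memv_span; apply: map_f.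
  by rewrite mem_iota add0n; exact: leq_trans (ltn_ord l) dR.
apply/span_subvP => x /mapP [j]; rewrite mem_iota add0n => /andP [_ jN] ->.
rewrite (proj1 (hc j jN)) big_seq; apply: memv_suml => k kK; apply: memvZ.
have ik : (index k K < d)%N by rewrite index_mem.
by have := Bin (Ordinal ik); rewrite /kt /= nth_index.
Qed.

End Core.

Unset Implicit Arguments. Set Strict Implicit.

Lemma sum_reindex (V : nmodType) n m (f : nat -> V) :
  \sum_(j < n * m) f j = \sum_(k < m) \sum_(i < n) f (i + n * k)%N.
Proof.
elim: m => [|m IH]; first by rewrite muln0 !big_ord0.
rewrite big_ord_recr /= -IH -!(big_mkord xpredT) mulnS addnC.
rewrite (big_cat_nat (n := n * m)) ?leq_addr //=; congr (_ + _).
rewrite -{1}[(n * m)%N]add0n big_addn addKn big_mkord.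
by apply: eq_bigr => i _; rewrite addnC.
Qed.

Lemma horner_split (F : fieldType) n (p q : {poly F}) (b : F) :
  (0 < n)%N -> (size p <= n)%N -> (size q <= n)%N ->
  p.[b] * q.[b ^+ n] = \sum_(j < n * n) b ^+ j * (p`_(j %% n) * q`_(j %/ n)).
Proof.
move=> n0 sp sq; rewrite (horner_coef_wide b sp) (horner_coef_wide _ sq) (@sum_reindex _ n n (fun j => b ^+ j * (p`_(j %% n) * q`_(j %/ n)))) /=.
rewrite mulr_suml exchange_big /=; apply: eq_bigr => k _.
rewrite mulr_sumr; apply: eq_bigr => i _.
have e1 : ((k + n * i) %% n = k)%N by rewrite mulnC addnC modnMDl modn_small.
have e2 : ((k + n * i) %/ n = i)%N by rewrite mulnC addnC divnMDl // divn_small ?addn0.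
rewrite e1 e2 exprD exprM; ring.
Qed.

Theorem lemma3p5 (F : fieldType) (n r : nat) (hn : (1 <= n)%N) (hr : (1 <= r)%N)
  (M N : 'M[{poly F}]_r)
  (hM : forall i j, (size (M i j) <= n)%N)
  (hN : forall i j, (size (N i j) <= n)%N)
  (w : F) (hw : order_ge w (n ^ 2)) :
  (forall a : F,
     (<<eval_family n M N w a>> <= <<coeff_family n M N>>)%VS) /\
  (exists bad : seq F, (size bad < n ^ 2 * r ^ 2)%N /\
     forall a : F, a \notin bad ->
       <<coeff_family n M N>>%VS = <<eval_family n M N w a>>%VS).
Proof.
pose P := liftX M *m liftY N.
pose C j := coeffXY P (j %% n) (j %/ n).
have n2 : (n ^ 2 = n * n)%N by rewrite expnS expn1.
have coefE i j a b : coeffXY P i j a b = \sum_c (M a c)`_i * (N c b)`_j.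
  rewrite /coeffXY /P !mxE !coef_sum; apply: eq_bigr => c _.
  by rewrite !mxE coefCM coef_map /= coefMC.
have key b : evalmx M b *m evalmx N (b ^+ n) = Ev C (n ^ 2) b.
  apply/matrixP => a b'; rewrite /Ev summxE !mxE n2.
  under [RHS]eq_bigr do rewrite mxE. rewrite /C. under [RHS]eq_bigr do rewrite coefE mulr_sumr.
  rewrite exchange_big /=; apply: eq_bigr => c _.
  by rewrite !mxE horner_split.
have Cin j : (j < n ^ 2)%N -> C j \in <<coeff_family n M N>>%VS.
  move=> jn; apply: memv_span; apply: allpairs_f; rewrite mem_iota add0n.
    by rewrite ltn_pmod.
  by rewrite ltn_divLR // -n2.
have part1 a : (<<eval_family n M N w a>> <= <<coeff_family n M N>>)%VS.
  apply/span_subvP => x /mapP [l _ ->]; rewrite key.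
  by apply: memv_suml => j _; apply: memvZ; apply: Cin.
split => //.
case: hw => w0 hw.
have [bad [sb hb]] := core C (N := n ^ 2) (R := r ^ 2) (w := w)
   ltac:(by rewrite expn_gt0 hn) ltac:(by rewrite expn_gt0 hr) w0 hw
   ltac:(by rewrite dimvf dim_matrix expnS expn1).
exists bad; split => // a abad.
apply/eqP; rewrite eqEsubv part1 andbT.
have -> : eval_family n M N w a = [seq Ev C (n ^ 2) (w ^+ l * a) | l <- iota 0 (r ^ 2)].
  by apply: eq_map => l; rewrite key.
apply: subv_trans (hb a abad).
apply/span_subvP => x /allpairsP [[i j] [/= hi hj ->]].
move: hi hj; rewrite !mem_iota !add0n => hi hj.
have -> : coeffXY (liftX M *m liftY N) i j = C (i + n * j)%N.
  rewrite /C mulnC addnC modnMDl modn_small // divnMDl ?divn_small ?addn0 //.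
apply: memv_span; apply: map_f; rewrite mem_iota add0n n2.
have : (i + n * j < n + n * j)%N by rewrite ltn_add2r.
have : (n * j <= n * (n - 1))%N by rewrite leq_mul2l; apply/orP; right; lia.
lia.
Qed.
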